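(* Let $X$ be a Hausdorff hereditarily disconnected space and $p\in X$ be such that $X-\{p\}$ is totally disconnected. Then $\mathcal{K}(X)$ is hereditarily disconnected.
   Context: $\mathcal{K}(X)$ is the set of nonempty compact subsets of $X$ with the Vietoris topology (generated by $U^+=\{A: A\subset U\}$ and $U^-=\{A: A\cap U\neq\emptyset\}$ for $U$ open in $X$). A space is hereditarily disconnected if every nonempty connected subset is a singleton; it is totally disconnected if any two distinct points can be separated by a clopen set (containing one but not the other). *)

(* Defs.v *)
From HB Require Import structures.
From mathcomp Require Import all_boot all_order.
From mathcomp Require Import all_classical all_reals all_analysis.
Set Implicit Arguments. Unset Strict Implicit. Unset Printing Implicit Defensive.
Local Open Scope classical_set_scope.

Definition hereditarily_disconnected {T : topologicalType} (A : set T) :=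
  forall C : set T, C `<=` A -> C !=set0 -> connected C ->
    exists x : T, C = [set x].

(** Totally disconnected (as in the paper): any two distinct points of A can be
    separated by a set which is clopen in the subspace A. *)
Definition clopen_sep_disconnected {T : topologicalType} (A : set T) :=
  forall x y : T, A x -> A y -> x <> y ->
    exists U : set T,
      [/\ (exists2 V, open V & U = A `&` V),
          (exists2 W, closed W & U = A `&` W), U x & ~ U y].

Definition hyperspace (X : topologicalType) :=
  {A : set X | A !=set0 /\ compact A}.

HB.instance Definition _ (X : topologicalType) := gen_eqMixin (hyperspace X).
HB.instance Definition _ (X : topologicalType) := gen_choiceMixin (hyperspace X).

(** Subbasic Vietoris sets: (true, U) |-> U^+ = {A | A ⊆ U},
    (false, U) |-> U^- = {A | A ∩ U ≠ ∅}, for U open in X. *)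
Definition vietoris_index (X : topologicalType) := (bool * set X)%type.

Definition vietoris_subbase (X : topologicalType)
    (i : vietoris_index X) : set (hyperspace X) :=
  if i.1 then [set A | proj1_sig A `<=` i.2]
  else [set A | proj1_sig A `&` i.2 !=set0].

Definition vietoris_dom (X : topologicalType) : set (vietoris_index X) :=
  [set i | open i.2].

HB.instance Definition _ (X : topologicalType) :=
  @isSubBaseTopological.Build (hyperspace X) (vietoris_index X)
    (@vietoris_dom X) (@vietoris_subbase X).

(* Main.v *)
Require Import Defs.
From HB Require Import structures.
From mathcomp Require Import all_boot all_order.
From mathcomp Require Import all_classical all_reals all_analysis.
Local Open Scope classical_set_scope.

Lemma dir_cover (X : topologicalType) (K : set X) (P : set (set X)) :
  compact K -> (forall V, P V -> open V) -> P !=set0 ->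
  (forall V W, P V -> P W -> P (V `|` W)) ->
  K `<=` \bigcup_(V in P) V -> exists2 V, P V & K `<=` V.
Proof.
move=> cK Po [V0 PV0] PU cov.
apply: contrapT => nex.
have hn : forall V, P V -> exists x, K x /\ ~ V x.
  move=> V PV; apply: contrapT => h; apply: nex; exists V => // x Kx.
  by apply: contrapT => nVx; apply: h; exists x.
pose F := filter_from P (fun V => K `\` V).
have FF : ProperFilter F.
  apply: filter_from_proper.
    apply: filter_from_filter; first by exists V0.
    move=> V W PV PW; exists (V `|` W); first exact: PU.
    by move=> x [Kx nVW]; split; split => //; move=> ?; apply: nVW; [left|right].
  by move=> V PV; have [x [Kx nVx]] := hn V PV; exists x.
have FK : F K by exists V0 => // x [].
have [x [Kx clx]] := cK F FF FK.
have [V PV Vx] := cov x Kx.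
have nV : nbhs x V by apply: open_nbhs_nbhs; split => //; exact: Po.
have FKV : F (K `\` V) by exists V.
have [y [[Ky nVy] Vy]] := clx _ _ FKV nV.
exact: nVy Vy.
Qed.

Lemma sep_pt_cpt (X : topologicalType) (K : set X) (x : X) :
  hausdorff_space X -> compact K -> ~ K x ->
  exists U V, [/\ open U, open V, U x, K `<=` V & U `&` V = set0].
Proof.
move=> hX cK nKx.
pose P := [set V : set X | open V /\ exists U, [/\ open U, U x & U `&` V = set0]].
have [] := @dir_cover X K P cK.
- by move=> V [].
- exists set0; split; first exact: open0.
  by exists setT; split; [exact: openT|by []|exact: setI0].
- move=> V W [oV [U [oU Ux UV]]] [oW [U' [oU' U'x U'W]]].
  split; first exact: openU.
  exists (U `&` U'); split => //; first exact: openI.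
  apply/seteqP; split => // y [[Uy U'y] [Vy|Wy]].
    by have : (U `&` V) y by []; rewrite UV.
  by have : (U' `&` W) y by []; rewrite U'W.
- move=> k Kk.
  have xk : x != k by apply/eqP => xk; apply: nKx; rewrite xk.
  have := hX; rewrite open_hausdorff => /(_ x k xk) [[A B] /=].
  rewrite !inE => -[xA kB] [oA oB /eqP AB].
  exists B; last by []. split; first by []. by exists A; split => //; apply/eqP.
- move=> V [oV [U [oU Ux UV]]] KV.
  by exists U, V; split.
Qed.

Lemma sep_cpt_cpt (X : topologicalType) (K1 K2 : set X) :
  hausdorff_space X -> compact K1 -> compact K2 -> K1 `&` K2 = set0 ->
  exists O1 O2, [/\ open O1, open O2, K1 `<=` O1, K2 `<=` O2 & O1 `&` O2 = set0].
Proof.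
move=> hX cK1 cK2 K12.
pose P := [set U : set X | open U /\ exists V, [/\ open V, K2 `<=` V & U `&` V = set0]].
have [] := @dir_cover X K1 P cK1.
- by move=> V [].
- exists set0; split; first exact: open0.
  by exists setT; split; [exact: openT|by []|exact: set0I].
- move=> U U' [oU [V [oV KV UV]]] [oU' [V' [oV' KV' UV']]].
  split; first exact: openU.
  exists (V `&` V'); split => //; first exact: openI.
    by move=> y Ky; split; [exact: KV|exact: KV'].
  apply/seteqP; split => // y [[Uy|U'y] [Vy V'y]].
    by have : (U `&` V) y by []; rewrite UV.
  by have : (U' `&` V') y by []; rewrite UV'.
- move=> x K1x.
  have nK2x : ~ K2 x.
    by move=> K2x; have : (K1 `&` K2) x by []; rewrite K12.
  have [U [V [oU oV Ux KV UV]]] := @sep_pt_cpt X K2 x hX cK2 nK2x.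
  by exists U => //; split => //; exists V; split.
- move=> U [oU [V [oV KV UV]]] KU.
  by exists U, V; split.
Qed.

Lemma Zsep (X : topologicalType) (p x : X) (K : set X) :
  hausdorff_space X -> clopen_sep_disconnected (~` [set p]) ->
  compact K -> ~ K p -> ~ K x -> x <> p ->
  exists V, [/\ open V, V x, K `&` V = set0 &
    exists2 F, closed F & forall y, y <> p -> (V y <-> F y)].
Proof.
move=> hX hZ cK nKp nKx xp.
have oZ : open (~` [set p]).
  apply: closed_openC; exact: (@accessible_closed_set1 X (hausdorff_accessible hX) p).
pose P := [set O : set X | exists V F, [/\ open V, closed F,
   (forall y, y <> p -> (V y <-> F y)), V x & O = ~` [set p] `&` ~` F]].
have [] := @dir_cover X K P cK.
- move=> O [V [F [_ cF _ _ ->]]]; apply: openI => //; exact: closed_openC.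
- exists set0, setT, setT; split; [exact: openT|exact: closedT|by []|by []|].
  by rewrite setCT setI0.
- move=> O O' [V [F [oV cF VF Vx ->]]] [V' [F' [oV' cF' VF' V'x ->]]].
  exists (V `&` V'), (F `&` F'); split => //.
  + exact: openI.
  + exact: closedI.
  + move=> y yp; split => -[a b]; split.
    * by apply/VF.
    * by apply/VF'.
    * by apply/VF.
    * by apply/VF'.
  + apply/seteqP; split => y.
      by move=> [[yp nFy]|[yp nF'y]]; split => // -[].
    move=> [yp nFF]; have [Fy|nFy] := pselect (F y).
      by right; split => // F'y; apply: nFF.
    by left.
- move=> k Kk.
  have kp : k <> p by move=> kp; apply: nKp; rewrite -kp.
  have xk : x <> k by move=> xk; apply: nKx; rewrite xk.
  have [U [[V oV UV] [W cW UW] Ux nUk]] := hZ x k xp kp xk.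
  exists (~` [set p] `&` ~` W); last first.
    by split => // Wk; apply: nUk; rewrite UW.
  exists V, W; split; [exact: oV|exact: cW| | |by []].
  + move=> y yp; split => h.
      have : U y by rewrite UV; split.
      by rewrite UW => -[].
    have : U y by rewrite UW; split.
    by rewrite UV => -[].
  + have : U x by [].
    by rewrite UV => -[].
- move=> O [V [F [oV cF VF Vx ->]]] KO.
  exists V; split => //.
    apply/seteqP; split => // y [Ky Vy].
    have [yp nFy] := KO y Ky.
    by apply: nFy; apply/VF.
  by exists F.
Qed.

Lemma conn_use (T : topologicalType) (A S O F : set T) : connected A ->
  open O -> closed F -> (forall x, A x -> (S x <-> O x)) ->
  (forall x, A x -> (S x <-> F x)) -> (exists x, A x /\ S x) ->
  forall x, A x -> S x.
Proof.
move=> cA oO cF SO SF [x0 [Ax0 Sx0]].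
have e : A `&` S = A.
  apply: cA; first by exists x0.
    exists O => //; apply/seteqP; split => x [Ax h]; split => //; by apply/SO.
  exists F => //; apply/seteqP; split => x [Ax h]; split => //; by apply/SF.
move=> x Ax.
have : (A `&` S) x by rewrite e.
by case.
Qed.

Lemma conn_intro (T : topologicalType) (A : set T) :
  (forall O F, open O -> closed F -> (forall x, A x -> (O x <-> F x)) ->
     (exists x, A x /\ O x) -> forall x, A x -> O x) -> connected A.
Proof.
move=> h B [b Bb] [Oc oO BO] [Fc cF BF].
have OF : forall x, A x -> (Oc x <-> Fc x).
  move=> x Ax; split => h1.
    have : B x by rewrite BO.
    by rewrite BF => -[].
  have : B x by rewrite BF.
  by rewrite BO => -[].
have [Ab Ob] : (A `&` Oc) b by rewrite -BO.
have := h Oc Fc oO cF OF (ex_intro _ b (conj Ab Ob)).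
move=> hA; rewrite BO; apply/seteqP; split => x; first by case.
by move=> Ax; split => //; apply: hA.
Qed.

Definition hval {X : topologicalType} (C : hyperspace X) : set X := proj1_sig C.

Lemma hval_compact {X : topologicalType} (C : hyperspace X) : compact (hval C).
Proof. exact: (proj2_sig C).2. Qed.

Lemma hval_ne {X : topologicalType} (C : hyperspace X) : hval C !=set0.
Proof. exact: (proj2_sig C).1. Qed.

Lemma hyp_eq {X : topologicalType} (A B : hyperspace X) : hval A = hval B -> A = B.
Proof. move: A B => [a pa] [b pb] /= eab; exact: eq_exist. Qed.

Definition mk {X : topologicalType} (S : set X) (C : hyperspace X) : hyperspace X :=
  match pselect (S !=set0 /\ compact S) with
  | left h => exist _ S h
  | right _ => C
  end.

Lemma mkE {X : topologicalType} (S : set X) (C : hyperspace X) :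
  S !=set0 -> compact S -> hval (mk S C) = S.
Proof. by move=> h1 h2; rewrite /mk; case: pselect => // -[]; split. Qed.

Lemma sub_open {X : topologicalType} (i : vietoris_index X) :
  vietoris_dom i -> open (vietoris_subbase i).
Proof.
move=> Di.
rewrite /open /=.
exists [set vietoris_subbase i].
  move=> _ ->. exact: finI_from1.
by rewrite bigcup_set1.
Qed.

Lemma open_char {X : topologicalType} (W : set (hyperspace X)) : open W ->
  exists2 D' : set (set (hyperspace X)),
    D' `<=` finI_from (@vietoris_dom X) (@vietoris_subbase X) &
    W = \bigcup_(i in D') i.
Proof. rewrite /open /=. case=> D' sD' <-. by exists D'. Qed.

Lemma subT_open {X : topologicalType} {U : set X} : open U ->
  open [set A : hyperspace X | hval A `<=` U].
Proof. move=> oU; exact: (@sub_open X (true, U)). Qed.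

Lemma subF_open {X : topologicalType} {U : set X} : open U ->
  open [set A : hyperspace X | hval A `&` U !=set0].
Proof. move=> oU; exact: (@sub_open X (false, U)). Qed.

From mathcomp Require Import finmap.

Definition pgood {X : topologicalType} (f : hyperspace X -> hyperspace X)
  (A : set (hyperspace X)) (W : set (hyperspace X)) :=
  exists2 O, open O & forall C, A C -> (W (f C) <-> O C).

Definition vcond {X : topologicalType} (f : hyperspace X -> hyperspace X)
  (A : set (hyperspace X)) :=
  (forall U, open U -> pgood f A [set B | hval B `<=` U]) /\
  (forall U, open U -> pgood f A [set B | hval B `&` U !=set0]).

Lemma pre_open {X : topologicalType} (f : hyperspace X -> hyperspace X)
  (A : set (hyperspace X)) : vcond f A ->
  forall W, open W -> pgood f A W.
Proof.
move=> [hT hF] W /open_char [D' sD' ->].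
have hfin : forall s : {fset vietoris_index X}, {subset s <= @vietoris_dom X} ->
    pgood f A (\bigcap_(j in [set` s]) vietoris_subbase j).
  elim/fset1U_rect.
    move=> _; exists setT; first exact: openT.
    by move=> C AC; split => // _ j; rewrite /= in_fset0.
  move=> i s _ IH sub.
  have [Q1 oO hO] : pgood f A (vietoris_subbase i).
    have : vietoris_dom i.
      by rewrite -in_setE; apply: sub; rewrite in_fset1U eqxx.
    case: i {sub IH} => -[] U /= oU.
    - exact: hT.
    - exact: hF.
  have [Q2 oO' hO'] : pgood f A (\bigcap_(j in [set` s]) vietoris_subbase j).
    by apply: IH => j js; apply: sub; rewrite in_fset1U js orbT.
  exists (Q1 `&` Q2); first exact: openI.
  move=> C AC; split.
    move=> h; split.
      by apply/hO => //; apply: h; rewrite /= in_fset1U eqxx.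
    by apply/hO' => // j js; apply: h; rewrite /= in_fset1U js orbT.
  move=> [OC Q2C] j; rewrite /= in_fset1U => /orP [/eqP ->|js].
    by apply/hO.
  by have := (proj2 (hO' C AC) Q2C); apply.
have hD : forall B, exists Q1, D' B -> open Q1 /\ forall C, A C -> (B (f C) <-> Q1 C).
  move=> B; have [DB|nDB] := pselect (D' B); last by exists setT.
  have [s ss <-] := sD' B DB.
  have [Q1 oO hO] := hfin s ss.
  by exists Q1.
have [g hg] := choice hD.
exists (\bigcup_(B in D') g B).
  apply: bigcup_open => B DB; exact: (hg B DB).1.
move=> C AC; split.
  by move=> [B DB BfC]; exists B => //; apply/((hg B DB).2 C AC).
by move=> [B DB gC]; exists B => //; apply/((hg B DB).2 C AC).
Qed.

Lemma conn_image {X : topologicalType} (f : hyperspace X -> hyperspace X)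
  (A : set (hyperspace X)) : connected A -> vcond f A -> connected (f @` A).
Proof.
move=> cA vc; apply: conn_intro => Q1 F oO cF OF [y [[a Aa <-] Ofa]].
have [R1 oR1 h1] := @pre_open _ f A vc _ oO.
have [R2 oR2 h2] := @pre_open _ f A vc _ (closed_openC cF).
have key := @conn_use _ A (fun C => Q1 (f C)) R1 (~` R2) cA oR1 (open_closedC oR2).
have : forall C, A C -> Q1 (f C).
  apply: key.
  - by move=> C AC; apply: h1.
  - move=> C AC; rewrite OF; last by exists C.
    split => h.
      by move/(h2 C AC).
    apply: contrapT => nF; apply: h; by apply/(h2 C AC).
  - by exists a.
by move=> hall z [c Ac <-]; apply: hall.
Qed.

Lemma Zfam {X : topologicalType} (p : X) (K : set (hyperspace X)) :
  hausdorff_space X -> clopen_sep_disconnected (~` [set p]) -> connected K ->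
  (forall C, K C -> ~ hval C p) -> forall A B, K A -> K B -> A = B.
Proof.
move=> hX hZ cK Kp.
have core : forall A B, K A -> K B -> forall x, hval A x -> ~ hval B x -> False.
  move=> A B KA KB x Ax nBx.
  have xp : x <> p by move=> e; apply: (Kp A KA); rewrite -e.
  have [V [oV Vx BV [F cF VF]]] :=
    @Zsep X p x (hval B) hX hZ (hval_compact B) (Kp B KB) nBx xp.
  have := @conn_use _ K (fun D => hval D `&` V !=set0)
    [set D | hval D `&` V !=set0] (~` [set D | hval D `<=` ~` F]) cK
    (subF_open oV) (open_closedC (subT_open (closed_openC cF))).
  move=> /(_ _ _ _ B KB) [].
  - by [].
  - move=> D KD; split.
      move=> [y [Dy Vy]] sub.
      have yp : y <> p by move=> e; apply: (Kp D KD); rewrite -e.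
      by apply: (sub y Dy); apply/(VF y yp).
    move=> nsub; apply: contrapT => nS; apply: nsub => y Dy Fy; apply: nS.
    have yp : y <> p by move=> e; apply: (Kp D KD); rewrite -e.
    by exists y; split => //; apply/(VF y yp).
  - by exists A; split => //; exists x.
  move=> y [By Vy].
  have : (hval B `&` V) y by [].
  by rewrite BV.
move=> A B KA KB; apply: hyp_eq; apply/seteqP; split => x h; apply: contrapT => nh.
  exact: (core A B KA KB x h nh).
exact: (core B A KB KA x h nh).
Qed.

Definition Yof {X : topologicalType} (H : set (hyperspace X)) : set X :=
  [set x | exists2 C, H C & hval C x].

Lemma fact1 {X : topologicalType} (p : X) (Hh : set (hyperspace X)) (Op Fp : set X) :
  hausdorff_space X -> clopen_sep_disconnected (~` [set p]) -> connected Hh ->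
  open Op -> closed Fp -> (forall x, Yof Hh x -> (Op x <-> Fp x)) -> ~ Op p ->
  forall C, Hh C -> forall x, Yof Hh x -> Op x -> hval C x.
Proof.
move=> hX hZ cH oO cF OF nOp C HC x Yx Ox.
have allmeet : forall D, Hh D -> hval D `&` Op !=set0.
  apply: (@conn_use _ Hh _ [set D | hval D `&` Op !=set0]
    (~` [set D | hval D `<=` ~` Fp]) cH (subF_open oO)
    (open_closedC (subT_open (closed_openC cF)))).
  - by [].
  - move=> D HD; split.
      move=> [y [Dy Oy]] sub; apply: (sub y Dy); apply/OF => //; by exists D.
    move=> nsub; apply: contrapT => nS; apply: nsub => y Dy Fy; apply: nS.
    by exists y; split => //; apply/OF => //; exists D.
  - by case: Yx => C' HC' C'x; exists C'; split => //; exists x.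
pose h := fun D : hyperspace X => mk (hval D `&` Fp) D.
have hE : forall D, Hh D -> hval (h D) = hval D `&` Fp.
  move=> D HD; apply: mkE.
  - have [y [Dy Oy]] := allmeet D HD; exists y; split => //.
    by apply/OF => //; exists D.
  - apply: compact_closedI => //; exact: hval_compact.
have ch : connected (h @` Hh).
  apply: conn_image => //; split.
  - move=> U oU; exists [set D | hval D `<=` U `|` ~` Fp].
      apply: subT_open; apply: openU => //; exact: closed_openC.
    move=> D HD /=; rewrite hE //; split.
      move=> sub y Dy; have [Fy|nFy] := pselect (Fp y).
        by left; apply: sub.
      by right.
    by move=> sub y [Dy Fy]; case: (sub y Dy).
  - move=> U oU; exists [set D | hval D `&` (Op `&` U) !=set0].
      apply: subF_open; exact: openI.
    move=> D HD /=; rewrite hE //; split.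
      move=> [y [[Dy Fy] Uy]]; exists y; split => //; split => //.
      by apply/OF => //; exists D.
    move=> [y [Dy [Oy Uy]]]; exists y; split => //; split => //.
    by apply/OF => //; exists D.
have eqh : forall D1 D2, Hh D1 -> Hh D2 -> h D1 = h D2.
  move=> D1 D2 H1 H2; apply: (@Zfam X p (h @` Hh) hX hZ ch).
  - move=> _ [D HD <-]; rewrite hE // => -[Dp Fp'].
    by apply: nOp; apply/OF => //; exists D.
  - by exists D1.
  - by exists D2.
case: Yx => C' HC' C'x.
have : hval (h C') x.
  by rewrite hE //; split => //; apply/OF => //; exists C'.
by rewrite (eqh C' C HC' HC) hE // => -[].
Qed.

Lemma mainp {X : topologicalType} (p : X) (Hh : set (hyperspace X)) :
  hausdorff_space X -> hereditarily_disconnected (@setT X) ->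
  clopen_sep_disconnected (~` [set p]) -> connected Hh -> Hh !=set0 ->
  (forall C, Hh C -> hval C p) -> forall A B, Hh A -> Hh B -> A = B.
Proof.
move=> hX hd hZ cH [C0 HC0] Hp.
pose Y := Yof Hh.
pose E := \bigcap_(C in Hh) hval C.
have Yp : Y p by exists C0 => //; exact: Hp.
have EY : E `<=` Y by move=> x Ex; exists C0 => //; exact: Ex.
have cE : closed E.
  by apply: closed_bigI => C HC; exact: compact_closed hX (hval_compact C).
have cpE : compact E.
  by apply: (subclosed_compact cE (hval_compact C0)) => x Ex; exact: Ex.
pose goodV := [set V : set X | [/\ open V,
   (exists2 F, closed F & forall x, Y x -> (V x <-> F x)) & ~ V p]].
pose OU := \bigcup_(V in goodV) V.
have oOU : open OU by apply: bigcup_open => V [].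
have nOUp : ~ OU p by move=> [V [_ _ nVp] Vp].
have UE : forall x, Y x -> OU x -> E x.
  move=> x Yx [V [oV [F cF VF] nVp] Vx] C HC.
  exact: (@fact1 X p Hh V F hX hZ cH oV cF VF nVp C HC x Yx Vx).
pose g := fun D : hyperspace X => mk (hval D `&` ~` OU) D.
have gE : forall D, Hh D -> hval (g D) = hval D `&` ~` OU.
  move=> D HD; apply: mkE.
  - by exists p; split; [exact: Hp|].
  - apply: compact_closedI; [exact: hval_compact|exact: open_closedC].
have cg : connected (g @` Hh).
  apply: conn_image => //; split.
  - move=> U oU; exists [set D | hval D `<=` U `|` OU].
      by apply: subT_open; exact: openU.
    move=> D HD /=; rewrite gE //; split.
      move=> sub y Dy; have [OUy|nOUy] := pselect (OU y); first by right.
      by left; apply: sub.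
    by move=> sub y [Dy nOUy]; case: (sub y Dy).
  - move=> U oU.
    have [[z [[Ez nOUz] Uz]]|nE] := pselect ((E `&` ~` OU `&` U) !=set0).
      exists setT; first exact: openT.
      move=> D HD /=; rewrite gE //; split => // _.
      by exists z; split => //; split => //; exact: Ez.
    exists [set D | hval D `&` (U `&` ~` E) !=set0].
      apply: subF_open; apply: openI => //; exact: closed_openC.
    move=> D HD /=; rewrite gE //; split.
      move=> [y [[Dy nOUy] Uy]]; exists y; split => //; split => // Ey.
      by apply: nE; exists y; split => //; split.
    move=> [y [Dy [Uy nEy]]]; exists y; split => //; split => // OUy.
    by apply: nEy; apply: UE => //; exists D.
pose Ys := Y `&` ~` OU.
have YsE : forall x, Yof (g @` Hh) x <-> Ys x.
  move=> x; split.
    move=> [_ [D HD <-]]; rewrite gE // => -[Dx nOUx]; split => //; by exists D.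
  move=> [[D HD Dx] nOUx]; exists (g D); first by exists D.
  by rewrite gE.
have core : forall N0 F0, open N0 -> closed F0 ->
    (forall x, Ys x -> (N0 x <-> F0 x)) -> ~ N0 p ->
    forall q, Ys q -> N0 q -> False.
  move=> N0 F0 oN0 cF0 OF0 nN0p q Ysq N0q.
  have QE : forall x, Ys x -> N0 x -> E x.
    move=> x Ysx N0x C HC.
    have OF' : forall y, Yof (g @` Hh) y -> (N0 y <-> F0 y).
      by move=> y /YsE; exact: OF0.
    have gC : (g @` Hh) (g C) by exists C.
    have := @fact1 X p (g @` Hh) N0 F0 hX hZ cg oN0 cF0 OF' nN0p (g C) gC x
      (proj2 (YsE x) Ysx) N0x.
    by rewrite gE // => -[].
  have cQ : compact (E `&` ~` OU `&` F0).
    apply: compact_closedI => //; apply: compact_closedI => //.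
    exact: open_closedC.
  have cKP : compact (E `&` ~` OU `&` ~` N0).
    apply: compact_closedI; last exact: open_closedC.
    apply: compact_closedI => //; exact: open_closedC.
  have disj : (E `&` ~` OU `&` F0) `&` (E `&` ~` OU `&` ~` N0) = set0.
    apply/seteqP; split => // x [[[Ex nOUx] F0x] [_ nN0x]].
    by apply: nN0x; apply/OF0 => //; split => //; exact: EY.
  have [P1 [P2 [oP1 oP2 QP1 KP2 P12]]] := @sep_cpt_cpt X _ _ hX cQ cKP disj.
  pose G' := Y `&` (N0 `&` P1).
  have G'E : G' `<=` E.
    move=> x [Yx [N0x P1x]]; have [OUx|nOUx] := pselect (OU x).
      exact: UE.
    by apply: QE => //; split.
  have clE : closure G' `<=` E.
    move=> x clx; have := closureS G'E clx.
    by rewrite -(proj1 (closure_id E) cE).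
  have cpcl : compact (closure G') := subclosed_compact (@closed_closure _ G') cpE clE.
  have clcov : closure G' `<=` (N0 `&` P1) `|` OU.
    move=> z clz; have Ez := clE z clz; have Yz := EY z Ez.
    have [OUz|nOUz] := pselect (OU z); first by right.
    left.
    have N0z : N0 z.
      apply: contrapT => nN0z.
      have KPz : (E `&` ~` OU `&` ~` N0) z by split; [split|].
      have nb : nbhs z P2 by apply: open_nbhs_nbhs; split => //; exact: KP2.
      have [y [[Yy [N0y P1y]] P2y]] := clz P2 nb.
      have : (P1 `&` P2) y by [].
      by rewrite P12.
    split => //; apply: QP1; split; [split => //|].
    by apply/OF0 => //; split.
  have [W [V [gV ->]] clW] : exists2 W,
      (exists V, goodV V /\ W = (N0 `&` P1) `|` V) & closure G' `<=` W.
    apply: (@dir_cover X (closure G') _ cpcl).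
    - move=> _ [V [[oV _ _] ->]]; apply: openU => //; exact: openI.
    - exists ((N0 `&` P1) `|` set0), set0; split => //.
      split; [exact: open0| |by []].
      by exists set0; [exact: closed0|].
    - move=> _ _ [V [[oV [FV cFV VFV] nVp] ->]] [V' [[oV' [FV' cFV' VFV'] nV'p] ->]].
      exists (V `|` V'); split; last by rewrite setUACA setUid.
      split; [exact: openU| |by move=> []].
      exists (FV `|` FV'); first exact: closedU.
      move=> x Yx; split => -[h|h].
      + by left; apply/(VFV x Yx).
      + by right; apply/(VFV' x Yx).
      + by left; apply/(VFV x Yx).
      + by right; apply/(VFV' x Yx).
    - move=> z /clcov [h|[V gV Vz]].
        exists ((N0 `&` P1) `|` set0); last by left.
        exists set0; split => //; split; [exact: open0| |by []].
        by exists set0; [exact: closed0|].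
      by exists ((N0 `&` P1) `|` V); [exists V|right].
  have [oV [FV cFV VFV] nVp] := gV.
  have gG : goodV ((N0 `&` P1) `|` V).
    split.
    - apply: openU => //; exact: openI.
    - exists (closure G' `|` FV); first by apply: closedU => //; exact: closed_closure.
      move=> x Yx; split.
        move=> [[N0x P1x]|Vx].
          by left; apply: subset_closure.
        by right; apply/(VFV x Yx).
      move=> [clx|FVx]; first exact: clW.
      by right; apply/(VFV x Yx).
    - by move=> [[N0p _]|Vp].
  have P1q : P1 q.
    apply: QP1; split; [split|].
    - exact: QE.
    - exact: (proj2 Ysq).
    - exact/OF0.
  by apply: (proj2 Ysq); exists ((N0 `&` P1) `|` V) => //; left.
have Ysp : Ys p by split.
have cYs : connected Ys.
  apply: conn_intro => Oc Fc oOc cFc OFc [x0 [Ysx0 Ox0]] x Ysx.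
  have [Op|nOp] := pselect (Oc p).
    apply: contrapT => nOx.
    apply: (core (~` Fc) (~` Oc) (closed_openC cFc) (open_closedC oOc) _ _ x Ysx).
    + move=> y Ysy; split => h1 h2; apply: h1; apply/(OFc y Ysy) => //.
    + by move=> nFp; apply: nFp; apply/(OFc p Ysp).
    + by move=> Fx; apply: nOx; apply/(OFc x Ysx).
  by exfalso; exact: (core Oc Fc oOc cFc OFc nOp x0 Ysx0 Ox0).
have [z Ysz] := hd Ys (fun _ _ => I) (ex_intro _ p Ysp) cYs.
have zp : p = z by have : Ys p by []; rewrite Ysz.
have valE : forall A, Hh A -> hval A = E.
  move=> A HA; apply/seteqP; split => x.
    move=> Ax; have Yx : Y x by exists A.
    have [OUx|nOUx] := pselect (OU x); first exact: UE.
    have : Ys x by split.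
    rewrite Ysz => /= xz; rewrite xz -zp => C HC; exact: Hp.
  by move=> Ex; exact: Ex A HA.
by move=> A B HA HB; apply: hyp_eq; rewrite !valE.
Qed.

Theorem proposition5p5 (X : topologicalType) (p : X) :
  hausdorff_space X ->
  hereditarily_disconnected (@setT X) ->
  clopen_sep_disconnected (~` [set p]) ->
  hereditarily_disconnected (@setT (hyperspace X)).
Proof.
move=> hX hd hZ K _ [A0 KA0] cK.
pose f := fun C : hyperspace X => mk (hval C `|` [set p]) C.
have fE : forall C, hval (f C) = hval C `|` [set p].
  move=> C; apply: mkE.
  - by have [x Cx] := hval_ne C; exists x; left.
  - by apply: compactU; [exact: hval_compact|exact: compact_set1].
have cf : connected (f @` K).
  apply: conn_image => //; split.
  - move=> U oU; have [Up|nUp] := pselect (U p).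
      exists [set D | hval D `<=` U]; first exact: subT_open.
      move=> D KD /=; rewrite fE; split.
        by move=> sub y Dy; apply: sub; left.
      by move=> sub y [Dy|->]; [exact: sub|].
    exists set0; first exact: open0.
    move=> D KD /=; rewrite fE; split => // sub.
    by apply: nUp; apply: sub; right.
  - move=> U oU; have [Up|nUp] := pselect (U p).
      exists setT; first exact: openT.
      move=> D KD /=; rewrite fE; split => // _.
      by exists p; split => //; right.
    exists [set D | hval D `&` U !=set0]; first exact: subF_open.
    move=> D KD /=; rewrite fE; split.
      move=> [y [[Dy|yp] Uy]]; first by exists y.
      by exfalso; apply: nUp; rewrite -yp.
    by move=> [y [Dy Uy]]; exists y; split => //; left.
have feq : forall C D, K C -> K D -> f C = f D.
  move=> C D KC KD; apply: (@mainp X p (f @` K) hX hd hZ cf).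
  - by exists (f A0); exists A0.
  - by move=> _ [C' KC' <-]; rewrite fE; right.
  - by exists C.
  - by exists D.
have fval : forall C, K C -> hval C `|` [set p] = hval A0 `|` [set p].
  by move=> C KC; rewrite -!fE (feq C A0 KC KA0).
have samep : forall C D, K C -> K D -> (hval C p <-> hval D p) -> C = D.
  move=> C D KC KD pp; apply: hyp_eq; apply/seteqP; split => x h.
    have : (hval C `|` [set p]) x by left.
    rewrite fval // -(fval D KD) => -[//|xp].
    by move: h; have -> : x = p := xp; move=> h; apply/pp.
  have : (hval D `|` [set p]) x by left.
  rewrite fval // -(fval C KC) => -[//|xp].
  by move: h; have -> : x = p := xp; move=> h; apply/pp.
exists A0; apply/seteqP; split => C; last by move=> ->.
move=> KC.
have [e|ne] := pselect (hval C p <-> hval A0 p); first exact: samep.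
exfalso.
have [B0 [B1 [KB0 KB1 nB0 B1p]]] :
    exists B0 B1, [/\ K B0, K B1, ~ hval B0 p & hval B1 p].
  have [Cp|nCp] := pselect (hval C p).
    exists A0, C; split => // A0p; apply: ne; by split.
  exists C, A0; split => //; apply: contrapT => nA0p; apply: ne.
  by split => h; [case: (nCp h)|case: (nA0p h)].
have cB0 : closed (hval B0) := compact_closed hX (hval_compact B0).
have oZ : open (~` [set p]).
  apply: closed_openC; exact: (@accessible_closed_set1 X (hausdorff_accessible hX) p).
have := @conn_use _ K (fun D => ~ hval D p) [set D | hval D `<=` ~` [set p]]
  (~` [set D | hval D `&` ~` hval B0 !=set0]) cK (subT_open oZ)
  (open_closedC (subF_open (closed_openC cB0))).
move=> /(_ _ _ _ B1 KB1) [] //.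
- move=> D KD; split.
    by move=> nDp y Dy yp; apply: nDp; rewrite -yp.
  by move=> sub Dp; exact: (sub p Dp).
- move=> D KD; split.
    move=> nDp [y [Dy nB0y]].
    have : (hval D `|` [set p]) y by left.
    rewrite fval // -(fval B0 KB0) => -[//|yp].
    by apply: nDp; rewrite -yp.
  by move=> h Dp; apply: h; exists p; split.
- by exists B0.
Qed.
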